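(* Let $n>1$, $m\ge1$, let $P$ be a pivot path of $v\in Z_{n,m}$ and let $I=[p_1+1,p_2]$ be a $P$-interval. If $I$ contains $0$ or $m+1$, assume also that no step of $P$ is a left shift at $m$ applied to a vertex whose entry $m+1$ equals $0$, and no step of $P$ is a right shift at $0$ applied to a vertex whose entry $0$ equals $0$. Then: (1) if $P$ shifts left in $I$, then $d_I(P)=\sum_{i\in I} i\,v_i$; (2) if $P$ shifts right in $I$, then $d_I(P)=\sum_{i\in I}(m+1-i)v_i$.
   Context: Elements of $\mathbb{Z}_n$ are identified with representatives in $\{0,\dots,n-1\}$ (so $v_0,v_{m+1}$ are treated as such integers in sums). $Z_{n,m}$ has vertices $u=(u_0,\dots,u_{m+1})\in\mathbb{Z}_n\times\{-1,0,1\}^m\times\mathbb{Z}_n$ with $\sum u_i\equiv0\pmod n$. A step from $v$ to $u$ is a left shift at $i$ ($0\le i\le m$) if $u_j=v_j$ for $j\notin\{i,i+1\}$, $u_i=v_i+1$, $u_{i+1}=v_{i+1}-1$, and a right shift at $i$ if $u_i=v_i-1$, $u_{i+1}=v_{i+1}+1$ (arithmetic in coordinates $0,m+1$ in $\mathbb{Z}_n$); vertices are adjacent iff related by such a shift. For a path $P$ from $v$ to the all-zero vertex $0$: $0\le p\le m$ is an inner wall if no step is a shift at $p$; $-1$ is a wall if no step is a left shift at $0$; $m+1$ is a wall if no step is a right shift at $m$. A $p$-pivot path of $v$ is a shortest path from $v$ to $0$ among those having $p$ as a wall; a pivot path is a $p$-pivot path for some $p$. If $p_1<\dots<p_t$ are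 the inner walls of $P$, $p_0=-1$, $p_{t+1}=m+1$, the $P$-intervals are $[p_k+1,p_{k+1}]$, $0\le k\le t$. For a pivot path, all steps that are shifts at some $j$ with $[j,j+1]\subseteq I$ go in the same direction; $P$ shifts left (right) in $I$ if that direction is left (right). $d_I(P)$ is the number of steps of $P$ that are shifts at some $j$ with $[j,j+1]\subseteq I$. *)

(* Defs.v *)
From mathcomp Require Import all_boot all_order all_algebra.
Unset Printing Implicit Defensive.
Import Order.TTheory GRing.Theory Num.Theory.

(* A candidate vertex of Z_{n,m}: a vector (u_0, ..., u_{m+1}) of integers.
   Entries 0 and m+1 (elements of Z_n) are represented by their
   representatives in {0,...,n-1}. *)
Definition vertex (m : nat) := {ffun 'I_m.+2 -> int}.

Definition zerov (m : nat) : vertex m := [ffun => 0%R].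

Definition is_vertex (n m : nat) (u : vertex m) : Prop :=
  (forall i : 'I_m.+2, (i == 0 :> nat) || (i == m.+1 :> nat) ->
      (0 <= u i)%R /\ (u i < n%:Z)%R) /\
  (forall i : 'I_m.+2, (0 < i <= m)%N -> u i \in [:: (-1)%R; 0%R; 1%R]) /\
  (n%:Z %| (\sum_(i < m.+2) u i)%R)%Z.

Definition cadd (n m j : nat) (a d : int) : int :=
  if (j == 0) || (j == m.+1) then ((a + d) %% n%:Z)%Z else (a + d)%R.

Definition shift_by (n m i : nat) (dl dr : int) (x y : vertex m) : bool :=
  (i <= m) &&
  [forall j : 'I_m.+2,
     y j == (if (j == i :> nat) then cadd n m j (x j) dl
             else if (j == i.+1 :> nat) then cadd n m j (x j) dr
             else x j)].

Definition left_shift (n m i : nat) (x y : vertex m) : bool :=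
  shift_by n m i 1%R (-1)%R x y.

Definition right_shift (n m i : nat) (x y : vertex m) : bool :=
  shift_by n m i (-1)%R 1%R x y.

Definition shift_at (n m i : nat) (x y : vertex m) : bool :=
  left_shift n m i x y || right_shift n m i x y.

Definition adjacent (n m : nat) (x y : vertex m) : Prop :=
  exists i : nat, shift_at n m i x y.

(* A path is the nonempty sequence of its vertices x_0, ..., x_L;
   its steps are (x_k, x_{k+1}) for k < L, its length is L = size P - 1. *)
Definition vtx (m : nat) (P : seq (vertex m)) (k : nat) : vertex m :=
  nth (zerov m) P k.
Arguments vtx {m} P k.

Definition is_path_to_zero (n m : nat) (v : vertex m) (P : seq (vertex m)) : Prop :=
  (0 < size P)%N /\
  vtx P 0 = v /\
  vtx P (size P).-1 = zerov m /\
  (forall k, (k < size P)%N -> is_vertex n m (vtx P k)) /\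
  (forall k, (k.+1 < size P)%N -> adjacent n m (vtx P k) (vtx P k.+1)).

Definition inner_wall (n m : nat) (P : seq (vertex m)) (p : nat) : Prop :=
  (p <= m)%N /\
  forall k, (k.+1 < size P)%N -> ~~ shift_at n m p (vtx P k) (vtx P k.+1).

Definition is_wall (n m : nat) (P : seq (vertex m)) (p : int) : Prop :=
  if p == (-1)%R then
    forall k, (k.+1 < size P)%N -> ~~ left_shift n m 0 (vtx P k) (vtx P k.+1)
  else if p == (Posz m.+1) then
    forall k, (k.+1 < size P)%N -> ~~ right_shift n m m (vtx P k) (vtx P k.+1)
  else exists2 q : nat, p = Posz q & inner_wall n m P q.

Definition is_p_pivot_path (n m : nat) (v : vertex m) (p : int) (P : seq (vertex m)) : Prop :=
  (-1 <= p)%R /\ (p <= (Posz m.+1))%R /\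
  is_path_to_zero n m v P /\ is_wall n m P p /\
  forall Q, is_path_to_zero n m v Q -> is_wall n m Q p -> (size P <= size Q)%N.

Definition is_pivot_path (n m : nat) (v : vertex m) (P : seq (vertex m)) : Prop :=
  exists p : int, is_p_pivot_path n m v p P.

(* [a, b] is a P-interval, i.e. a = p_k + 1 and b = p_{k+1} for consecutive
   elements p_k < p_{k+1} of the list -1 = p_0 < p_1 < ... < p_t < p_{t+1} = m+1,
   where p_1 < ... < p_t are the inner walls of P. *)
Definition P_interval (n m : nat) (P : seq (vertex m)) (a b : nat) : Prop :=
  (a <= b)%N /\ (b <= m.+1)%N /\
  (a = 0%N \/ inner_wall n m P a.-1) /\
  (b = m.+1 \/ inner_wall n m P b) /\
  (forall q : nat, (a <= q < b)%N -> ~ inner_wall n m P q).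

Definition shifts_left_in (n m : nat) (P : seq (vertex m)) (a b : nat) : Prop :=
  forall k j, (k.+1 < size P)%N -> (a <= j)%N -> (j.+1 <= b)%N ->
    shift_at n m j (vtx P k) (vtx P k.+1) -> left_shift n m j (vtx P k) (vtx P k.+1).

Definition shifts_right_in (n m : nat) (P : seq (vertex m)) (a b : nat) : Prop :=
  forall k j, (k.+1 < size P)%N -> (a <= j)%N -> (j.+1 <= b)%N ->
    shift_at n m j (vtx P k) (vtx P k.+1) -> right_shift n m j (vtx P k) (vtx P k.+1).

Definition d_I (n m : nat) (P : seq (vertex m)) (a b : nat) : nat :=
  \sum_(k < (size P).-1)
     [exists j : 'I_m.+1, (a <= j)%N && (j.+1 <= b)%N &&
                          shift_at n m j (vtx P k) (vtx P k.+1)].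

Definition no_zero_wrap (n m : nat) (P : seq (vertex m)) : Prop :=
  forall k, (k.+1 < size P)%N ->
    ~ (left_shift n m m (vtx P k) (vtx P k.+1) /\ vtx P k ord_max = 0%R) /\
    ~ (right_shift n m 0 (vtx P k) (vtx P k.+1) /\ vtx P k ord0 = 0%R).

(* Main.v *)
Require Import Defs.
From mathcomp Require Import all_boot all_order all_algebra.
Import Order.TTheory GRing.Theory Num.Theory.
From mathcomp Require Import zify ring.
Local Open Scope ring_scope.

Definition Phi (m a b : nat) (w : nat -> int) (x : vertex m) : int :=
  \sum_(j < m.+2 | (a <= j <= b)%N) w j * x j.

Lemma Phi_step m a b (w : nat -> int) (x y : vertex m) (i0 i1 : 'I_m.+2) (dl dr : int) :
  val i1 = (val i0).+1 -> (a <= i0)%N -> (i1 <= b)%N ->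
  w i0 * y i0 = w i0 * (x i0 + dl) -> w i1 * y i1 = w i1 * (x i1 + dr) ->
  (forall j : 'I_m.+2, j != i0 -> j != i1 -> y j = x j) ->
  Phi m a b w y = Phi m a b w x + w i0 * dl + w i1 * dr.
Proof.
move=> /= e1 a0 b1 h0 h1 ho.
have ne : i1 != i0 by apply/negP=> /eqP E; move: e1; rewrite E /=; lia.
have P0 : (a <= i0 <= b)%N by lia.
have P1 : ((a <= i1 <= b) && (i1 != i0))%N by rewrite ne; lia.
rewrite /Phi (bigD1 i0) //= (bigD1 i1) //= [in RHS](bigD1 i0) //= [in RHS](bigD1 i1) //=.
rewrite h0 h1.
rewrite (eq_bigr (fun j : 'I_m.+2 => w j * x j)); last first.
  by move=> j /andP [/andP [_ ?] ?]; rewrite ho.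
set S := \sum_(_ < _ | _) _. ring.
Qed.

Lemma Phi_same m a b (w : nat -> int) (x y : vertex m) :
  (forall j : 'I_m.+2, (a <= j <= b)%N -> y j = x j) -> Phi m a b w y = Phi m a b w x.
Proof. by move=> h; apply: eq_bigr => j /h ->. Qed.

Lemma shift_byP n m i dl dr (x y : vertex m) : shift_by n m i dl dr x y ->
  (i <= m)%N /\ forall j : 'I_m.+2, y j = (if (j == i :> nat) then cadd n m j (x j) dl
             else if (j == i.+1 :> nat) then cadd n m j (x j) dr
             else x j).
Proof. by case/andP=> H /forallP H2; split=> // j; apply/eqP. Qed.
Lemma neq_val {m} {j k : 'I_m} : j != k -> (val j == val k) = false.
Proof. by move=> h; apply/negbTE; apply: contra h => /eqP E; apply/eqP/val_inj. Qed.

Lemma left_in n m a b (x y : vertex m) i : (1 < n)%N -> is_vertex n m x ->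
  left_shift n m i x y -> (a <= i)%N -> (i.+1 <= b)%N ->
  (i = m -> x ord_max <> 0) ->
  Phi m a b (fun j => Posz j) y = Phi m a b (fun j => Posz j) x - 1.
Proof.
move=> n1 [Hv _] /shift_byP [im Hy] ai ib Hw.
have i0lt : (i < m.+2)%N by lia.
have i1lt : (i.+1 < m.+2)%N by lia.
rewrite (@Phi_step m a b _ x y (Ordinal i0lt) (Ordinal i1lt) 1 (-1)) //=.
- lia.
- rewrite Hy /= eqxx /cadd.
  have [E|i0] := eqVneq i 0%N; first by rewrite [X in Posz X]E !mul0r.
  have -> : (i == m.+1) = false by apply/eqP; lia.
  by rewrite ?(negbTE i0).
- rewrite Hy /=.
  have -> : (i.+1 == i) = false by apply/eqP; lia.
  rewrite eqxx /cadd /=.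
  have [E|ne] := eqVneq i.+1 m.+1; last by [].
  have Eo : Ordinal i1lt = ord_max by apply: val_inj; rewrite /= E.
  rewrite Eo.
  have [h1 h2] := Hv ord_max (introT orP (or_intror (eqxx _))).
  have h3 := Hw (eq_add_S _ _ E).
  rewrite modz_small //. apply/andP; split; lia.
- move=> j j0 j1; rewrite Hy.
  by rewrite (neq_val j0) (neq_val j1).
Qed.

Lemma right_in n m a b (x y : vertex m) i : (1 < n)%N -> is_vertex n m x ->
  right_shift n m i x y -> (a <= i)%N -> (i.+1 <= b)%N ->
  (i = 0%N -> x ord0 <> 0) ->
  Phi m a b (fun j => Posz (m.+1 - j)) y = Phi m a b (fun j => Posz (m.+1 - j)) x - 1.
Proof.
move=> n1 [Hv _] /shift_byP [im Hy] ai ib Hw.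
have i0lt : (i < m.+2)%N by lia.
have i1lt : (i.+1 < m.+2)%N by lia.
rewrite (@Phi_step m a b _ x y (Ordinal i0lt) (Ordinal i1lt) (-1) 1) //=.
- have -> : (m.+1 - i = (m - i).+1)%N by lia.
  have -> : (m.+1 - i.+1 = (m - i))%N by lia.
  rewrite intS; ring.
- rewrite Hy /= eqxx /cadd.
  have -> : (i == m.+1) = false by apply/eqP; lia.
  have [E|i0] := eqVneq i 0%N; last by rewrite ?(negbTE i0).
  rewrite /=.
  have Eo : Ordinal i0lt = ord0 by apply: val_inj; rewrite /= E.
  rewrite Eo.
  have [h1 h2] := Hv ord0 (introT orP (or_introl (eqxx _))).
  have h3 := Hw E.
  rewrite modz_small //. apply/andP; split; lia.
- rewrite Hy /=.
  have -> : (i.+1 == i) = false by apply/eqP; lia.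
  rewrite eqxx /cadd /=.
  have [E|ne] := eqVneq i.+1 m.+1; last by [].
  by rewrite [X in (m.+1 - X)%N]E subnn !mul0r.
- move=> j j0 j1; rewrite Hy.
  by rewrite (neq_val j0) (neq_val j1).
Qed.

Lemma out_step n m a b w (x y : vertex m) i dl dr : shift_by n m i dl dr x y ->
  (i.+1 < a)%N || (b < i)%N -> Phi m a b w y = Phi m a b w x.
Proof.
move=> /shift_byP [im Hy] h; apply: Phi_same => j jab; rewrite Hy.
have -> : (j == i :> nat) = false by apply/eqP; lia.
by have -> : (j == i.+1 :> nat) = false by apply/eqP; lia.
Qed.

Lemma out_case n m a b w (P : seq (vertex m)) k : P_interval n m P a b -> (k.+1 < size P)%N ->
  adjacent n m (vtx P k) (vtx P k.+1) ->
  ~~ [exists j : 'I_m.+1, (a <= j)%N && (j.+1 <= b)%N && shift_at n m j (vtx P k) (vtx P k.+1)] ->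
  Phi m a b w (vtx P k) = Phi m a b w (vtx P k.+1).
Proof.
move=> [ab [bm [Ha [Hb Hno]]]] kP [i sh] nB.
have [dl [dr sb]] : exists dl dr, shift_by n m i dl dr (vtx P k) (vtx P k.+1).
  by case/orP: sh => h; [exists 1, (-1) | exists (-1), 1].
have im : (i <= m)%N by case/andP: sb.
symmetry; apply: (@out_step n m a b w _ _ i dl dr sb).
have [ai|nai] := boolP ((a <= i) && (i.+1 <= b))%N.
  have im' : (i < m.+1)%N by lia.
  by case/negP: nB; apply/existsP; exists (Ordinal im'); rewrite /= ai sh.
have [E|nE] := eqVneq i.+1 a.
  case: Ha => [a0|[_ W]]; first lia.
  by case/negP: (W k kP); rewrite -E /=.
have [E|nE2] := eqVneq i b.
  case: Hb => [bm1|[_ W]]; first lia.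
  by case/negP: (W k kP); rewrite -E.
lia.
Qed.

Lemma telescope m a b w (P : seq (vertex m)) (c : nat -> nat) :
  (forall k, (k.+1 < size P)%N -> Phi m a b w (vtx P k) = Phi m a b w (vtx P k.+1) + Posz (c k)) ->
  (0 < size P)%N ->
  Phi m a b w (vtx P 0) = Phi m a b w (vtx P (size P).-1) + Posz (\sum_(k < (size P).-1) c k).
Proof.
move=> H sP.
suff S : forall t, (t < size P)%N ->
  Phi m a b w (vtx P 0) = Phi m a b w (vtx P t) + Posz (\sum_(k < t) c k).
  by apply: S; lia.
elim=> [|t IH] tP; first by rewrite big_ord0 addr0.
rewrite IH; last lia.
rewrite big_ord_recr /= PoszD H; last lia.
ring.
Qed.

Lemma Phi_zero m a b w : Phi m a b w (zerov m) = 0.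
Proof. by apply: big1 => j _; rewrite ffunE mulr0. Qed.

Definition Bk n m a b (P : seq (vertex m)) k : nat :=
  nat_of_bool [exists j : 'I_m.+1, (a <= j)%N && (j.+1 <= b)%N &&
                          shift_at n m j (vtx P k) (vtx P k.+1)].

Theorem lemma5p13 (n m : nat) (v : vertex m) (P : seq (vertex m)) (a b : nat) :
  (1 < n)%N -> (1 <= m)%N ->
  is_vertex n m v ->
  is_pivot_path n m v P ->
  P_interval n m P a b ->
  ((a = 0%N \/ b = m.+1) -> no_zero_wrap n m P) ->
  (shifts_left_in n m P a b ->
     Posz (d_I n m P a b) = (\sum_(i < m.+2 | (a <= i <= b)%N) (Posz i) * v i)%R) /\
  (shifts_right_in n m P a b ->
     Posz (d_I n m P a b) = (\sum_(i < m.+2 | (a <= i <= b)%N) (Posz (m.+1 - i)) * v i)%R).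
Proof.
move=> n1 m1 Hv [p [_ [_ [[sP [P0 [PL [Pv Padj]]]] _]]]] PI NW.
have PI' := PI. case: PI' => [ab [bm _]].
split=> SH.
- have Hs : forall k, (k.+1 < size P)%N -> Phi m a b (fun j => Posz j) (vtx P k) =
      Phi m a b (fun j => Posz j) (vtx P k.+1) + Posz (Bk n m a b P k).
    move=> k kP; rewrite /Bk.
    have [/existsP [j /andP [/andP [aj jb] sh]] | nB] := boolP [exists j : 'I_m.+1, (a <= j)%N && (j.+1 <= b)%N && shift_at n m j (vtx P k) (vtx P k.+1)].
      have ls := SH k j kP aj jb sh.
      rewrite (@left_in n m a b _ _ j n1 (Pv k (ltnW kP)) ls aj jb); first by rewrite subrK.
      move=> jm.
      have bm1 : b = m.+1 by lia.
      have [W _] := NW (or_intror bm1) k kP.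
      by move=> x0; apply: W; split => //; move: ls; rewrite jm.
    by rewrite (@out_case n m a b _ P k PI kP (Padj k kP) nB) addr0.
  have T := @telescope m a b _ P (Bk n m a b P) Hs sP.
  rewrite P0 PL Phi_zero add0r in T.
  exact: (esym T).
- have Hs : forall k, (k.+1 < size P)%N -> Phi m a b (fun j => Posz (m.+1 - j)) (vtx P k) =
      Phi m a b (fun j => Posz (m.+1 - j)) (vtx P k.+1) + Posz (Bk n m a b P k).
    move=> k kP; rewrite /Bk.
    have [/existsP [j /andP [/andP [aj jb] sh]] | nB] := boolP [exists j : 'I_m.+1, (a <= j)%N && (j.+1 <= b)%N && shift_at n m j (vtx P k) (vtx P k.+1)].
      have ls := SH k j kP aj jb sh.
      rewrite (@right_in n m a b _ _ j n1 (Pv k (ltnW kP)) ls aj jb); first by rewrite subrK.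
      move=> jm.
      have a0 : a = 0%N by lia.
      have [_ W] := NW (or_introl a0) k kP.
      by move=> x0; apply: W; split => //; move: ls; rewrite jm.
    by rewrite (@out_case n m a b _ P k PI kP (Padj k kP) nB) addr0.
  have T := @telescope m a b _ P (Bk n m a b P) Hs sP.
  rewrite P0 PL Phi_zero add0r in T.
  exact: (esym T).
Qed.
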